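(* Consider the ARLOD model on a finite connected graph $G$ with $N\ge 2$ agents, learning rate $\alpha\in(0,1)$, exploration rate $\epsilon\in(0,1)$, and any initial Q-values in $[-1,1]$. Then $$\mathbb{P}\big(\exists\, t_1<\infty \text{ and } o\in\{-1,1\} : Q^i_o(t_1)>Q^i_{-o}(t_1)\ \ \forall i\in\{1,\dots,N\}\big)>0.$$
   Context: The ARLOD (asymmetric reinforcement learning for opinion dynamics) model: $G=(V,E)$ is a finite simple undirected graph on vertex set $V=\{1,\dots,N\}$ (agents); $N(i)=\{u:(u,i)\in E\}$ is the neighbourhood of $i$. Each agent $i$ holds two Q-values $Q^i_{1}(t),Q^i_{-1}(t)\in\mathbb{R}$, initialized in $[-1,1]$. The favoured opinion of agent $i$ at time $t$ is $1$ if $Q^i_1(t)\ge Q^i_{-1}(t)$ and $-1$ otherwise. In each discrete round $t$: an agent $i$ is chosen uniformly at random from $V$; $i$ chooses a neighbour $j\in N(i)$ uniformly at random; $i$ expresses an opinion $o_i(t)$, equal to its favoured opinion with probability $1-\epsilon$ and to the other opinion with probability $\epsilon$; $j$ responds with $R_j=1$ if $o_i(t)$ equals $j$'s favoured opinion and $R_j=-1$ otherwise; then only agent $i$ updates, via $Q^i_{o_i(t)}(t+1)=(1-\alpha)Q^i_{o_i(t)}(t)+\alpha R_j$ and $Q^i_{-o_i(t)}(t+1)=Q^i_{-o_i(t)}(t)$. All other agents' Q-values are unchanged in that round. *)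

(* Defs.v *)
From HB Require Import structures.
From mathcomp Require Import all_boot all_order all_algebra.
From mathcomp Require Import reals.
Set Implicit Arguments. Unset Strict Implicit. Unset Printing Implicit Defensive.
Import Order.TTheory GRing.Theory Num.Theory.
Local Open Scope ring_scope.

(* Opinions are encoded as booleans: [true] stands for opinion 1,
   [false] for opinion -1. *)

Definition qstate (R : Type) (N : nat) := 'I_N -> bool -> R.

Section ARLOD.
Variables (R : realType) (N : nat) (e : rel 'I_N) (alpha eps : R).

Definition favoured (Q : qstate R N) (i : 'I_N) : bool := Q i false <= Q i true.

(* One round's random data: the chosen agent i, the chosen neighbour j,
   and whether i explores (expresses the non-favoured opinion). *)
Definition choice := ('I_N * 'I_N * bool)%type.

Definition choice_prob (c : choice) : R :=
  let: (i, j, x) := c in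
  N%:R^-1 * (if e i j then (#|[pred k | e i k]|%:R)^-1 else 0)
          * (if x then eps else 1 - eps).

Definition step (Q : qstate R N) (c : choice) : qstate R N :=
  let: (i, j, x) := c in
  let o := if x then ~~ favoured Q i else favoured Q i in
  let r : R := if o == favoured Q j then 1 else -1 in
  fun k b => if (k == i) && (b == o) then (1 - alpha) * Q k b + alpha * r
             else Q k b.

Definition state_at (Q0 : qstate R N) (s : seq choice) (t : nat) : qstate R N :=
  foldl step Q0 (take t s).

Definition strict_consensus (Q : qstate R N) : bool :=
  [exists o : bool, [forall i : 'I_N, Q i (~~ o) < Q i o]].

(* Probability (under the ARLOD dynamics started at Q0) of the event
   "there is t1 <= T with strict consensus at time t1", computed exactly
   by summing over all T-round histories. *)
Definition prob_consensus_by (Q0 : qstate R N) (T : nat) : R :=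
  \sum_(s : T.-tuple choice)
     (\prod_(c <- s) choice_prob c) *
     (if [exists t1 : 'I_T.+1, strict_consensus (state_at Q0 s t1)] then 1 else 0).

End ARLOD.

(* Main.v *)
Require Import Defs.
From HB Require Import structures.
From mathcomp Require Import all_boot all_order all_algebra.
From mathcomp Require Import reals.
From mathcomp Require Import ring lra zify.
Import Order.TTheory GRing.Theory Num.Theory.
Set Implicit Arguments. Unset Strict Implicit.
Local Open Scope ring_scope.


Definition bnd (R : realType) (N : nat) (Q : qstate R N) :=
  forall i b, -1 <= Q i b <= 1.

Lemma step_other (R : realType) (N : nat) (alpha : R) (Q : qstate R N)
  (i j k : 'I_N) (x b : bool) : k != i -> step alpha Q (i, j, x) k b = Q k b.
Proof. by move=> /negbTE hk /=; rewrite hk. Qed.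

Lemma step_self (R : realType) (N : nat) (alpha : R) (Q : qstate R N)
  (i j : 'I_N) (x b : bool) : step alpha Q (i, j, x) i b =
  let o := if x then ~~ favoured Q i else favoured Q i in
  if b == o then (1 - alpha) * Q i b + alpha * (if o == favoured Q j then 1 else -1)
  else Q i b.
Proof. by rewrite /= eqxx. Qed.

Lemma step_bnd (R : realType) (N : nat) (alpha : R) (ha : 0 < alpha < 1)
  (Q : qstate R N) c : bnd Q -> bnd (step alpha Q c).
Proof.
move: c => [[i j] x] hQ k b /=.
case: ifP => _; last exact: hQ.
move: (hQ k b) => /andP[h1 h2]; move/andP: ha => [a1 a2].
case: ifP => _; apply/andP; split; nra.
Qed.

Lemma fav_true (R : realType) (N : nat) (Q : qstate R N) k o :
  Q k (~~ o) < Q k o -> favoured Q k = o.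
Proof. case: o; rewrite /favoured /= => h; first by rewrite ltW.
  by apply/negbTE; rewrite -ltNge. Qed.

Lemma fav_le (R : realType) (N : nat) (Q : qstate R N) k o :
  favoured Q k = o -> Q k (~~ o) <= Q k o.
Proof. by case: o; rewrite /favoured /=; case: leP => // /ltW. Qed.

Lemma nfav_le (R : realType) (N : nat) (Q : qstate R N) k o :
  favoured Q k != o -> Q k o <= Q k (~~ o).
Proof. by case: o; rewrite /favoured /=; case: leP => // /ltW. Qed.

Lemma fav_false_lt (R : realType) (N : nat) (Q : qstate R N) k :
  favoured Q k = false -> Q k true < Q k false.
Proof. by rewrite /favoured; case: leP. Qed.


Lemma fav_other (R : realType) (N : nat) (alpha : R) (Q : qstate R N)
  (i j k : 'I_N) (x : bool) : k != i -> favoured (step alpha Q (i, j, x)) k = favoured Q k.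
Proof. by move=> hk; rewrite /favoured !step_other. Qed.

Lemma negb_eq (o : bool) : (~~ o == o) = false.
Proof. by case: o. Qed.
Lemma eq_negb (o : bool) : (o == ~~ o) = false.
Proof. by case: o. Qed.

Lemma neq_neg (b o : bool) : (b == o) = false -> b = ~~ o.
Proof. by case: b; case: o. Qed.

Lemma flip (R : realType) (N : nat) (alpha : R) (ha : 0 < alpha < 1)
  (i j : 'I_N) (hij : j != i) (n : nat) : forall (Q : qstate R N) o,
  bnd Q -> favoured Q j = o -> Q i (~~ o) - Q i o < n%:R * (2 * alpha) ->
  exists s : seq bool,
    let Q' := foldl (step alpha) Q [seq (i, j, x) | x <- s] in
    [/\ bnd Q', (forall k b, k != i -> Q' k b = Q k b) & favoured Q' i = o].
Proof.
move/andP: ha => [a1 a2].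
elim: n => [|n IH] Q o hb hj hd.
  exists [::]; split=> //; apply: fav_true; rewrite /= mul0r in hd *; lra.
case hf: (favoured Q i == o); first by exists [::]; split=> //=; exact: (eqP hf).
have hle := nfav_le (negbT hf).
have hfi : favoured Q i = ~~ o by apply: neq_neg.
set Q1 := step alpha Q (i, j, true).
have e1o : Q1 i o = (1 - alpha) * Q i o + alpha.
  by rewrite /Q1 step_self /= hfi hj negbK !eqxx mulr1.
have e1n : Q1 i (~~ o) = Q i (~~ o).
  by rewrite /Q1 step_self /= hfi hj negbK negb_eq.
have hb1 : bnd Q1 by apply: step_bnd => //; apply/andP.
have hj1 : favoured Q1 j = o by rewrite /Q1 fav_other.
case hf1: (favoured Q1 i == o).
  exists [:: true]; split=> //=; last exact: (eqP hf1).
  by move=> k b /negbTE hk /=; rewrite hk.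
have hfi1 : favoured Q1 i = ~~ o by apply: neq_neg.
set Q2 := step alpha Q1 (i, j, false).
have e2o : Q2 i o = Q1 i o.
  by rewrite /Q2 step_self /= hfi1 eq_negb.
have e2n : Q2 i (~~ o) = (1 - alpha) * Q1 i (~~ o) - alpha.
  by rewrite /Q2 step_self /= hfi1 hj1 eqxx negb_eq mulrN1.
have hb2 : bnd Q2 by apply: step_bnd => //; apply/andP.
have hj2 : favoured Q2 j = o by rewrite /Q2 fav_other.
have hd2 : Q2 i (~~ o) - Q2 i o < n%:R * (2 * alpha).
  rewrite e2o e2n e1o e1n; move: hd; rewrite -natr1 => hd.
  have : 0 <= alpha * (Q i (~~ o) - Q i o) by apply: mulr_ge0; lra.
  lra.
have [s [H1 H2 H3]] := IH Q2 o hb2 hj2 hd2.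
exists [:: true, false & s]; split=> // k b hk.
by rewrite /= H2 // /Q2 /Q1 !step_other.
Qed.

Lemma strict (R : realType) (N : nat) (alpha : R) (ha : 0 < alpha < 1)
  (i j : 'I_N) (hij : j != i) (Q : qstate R N) o :
  bnd Q -> favoured Q j = o -> favoured Q i = o ->
  exists s : seq bool,
    let Q' := foldl (step alpha) Q [seq (i, j, x) | x <- s] in
    [/\ bnd Q', (forall k b, k != i -> Q' k b = Q k b) & Q' i (~~ o) < Q' i o].
Proof.
move/andP: ha => [a1 a2] hb hj hi.
have hle := fav_le hi.
have hbi := hb i (~~ o); move/andP: hbi => [hb1 hb2].
set Q1 := step alpha Q (i, j, true).
have e1o : Q1 i o = Q i o.
  by rewrite /Q1 step_self /= hi eq_negb.
have e1n : Q1 i (~~ o) = (1 - alpha) * Q i (~~ o) - alpha.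
  by rewrite /Q1 step_self /= hi hj !eqxx negb_eq mulrN1.
have hj1 : favoured Q1 j = o by rewrite /Q1 fav_other.
have hi1 : favoured Q1 i = o.
  have h0 : 0 <= alpha * (Q i (~~ o) + 1) by apply: mulr_ge0; lra.
  move: hi e1o e1n hle h0; case: (o) => /= hi' E1 E2 hle' h0.
    rewrite /favoured E1 E2 /=; lra.
  apply: fav_true; rewrite E1 E2 /=.
  have := fav_false_lt hi'; lra.
set Q2 := step alpha Q1 (i, j, false).
have e2o : Q2 i o = (1 - alpha) * Q1 i o + alpha.
  by rewrite /Q2 step_self /= hi1 hj1 !eqxx mulr1.
have e2n : Q2 i (~~ o) = Q1 i (~~ o).
  by rewrite /Q2 step_self /= hi1 negb_eq.
have eQ : foldl (step alpha) Q [seq (i,j,x) | x <- [:: true; false]] = Q2 by [].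
exists [:: true; false]; rewrite eQ; split.
- by apply: step_bnd; [apply/andP | apply: step_bnd => //; apply/andP].
- by move=> k b hk; rewrite /Q2 /Q1 !step_other.
rewrite e2o e2n e1o e1n.
have : 0 <= (1 - alpha) * (Q i o - Q i (~~ o)) by apply: mulr_ge0; lra.
lra.
Qed.

Lemma convert (R : realType) (N : nat) (alpha : R) (ha : 0 < alpha < 1)
  (i j : 'I_N) (hij : j != i) (Q : qstate R N) :
  bnd Q ->
  exists s : seq bool,
    let Q' := foldl (step alpha) Q [seq (i, j, x) | x <- s] in
    [/\ bnd Q', (forall k b, k != i -> Q' k b = Q k b) &
        Q' i (~~ favoured Q j) < Q' i (favoured Q j)].
Proof.
move=> hb; have ha' := ha; move/andP: ha' => [a1 a2].
set o := favoured Q j.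
set n := Num.bound (alpha^-1).
have hn : alpha^-1 < n%:R by apply: archi_boundP; rewrite invr_ge0 ltW.
have hn' : alpha^-1 * alpha < n%:R * alpha by rewrite ltr_pM2r.
rewrite mulVf ?gt_eqF // in hn'.
have hd : Q i (~~ o) - Q i o < n%:R * (2 * alpha).
  move: (hb i o) (hb i (~~ o)) => /andP[h1 h2] /andP[h3 h4]; lra.
have [s1 [B1 O1 F1]] := flip ha hij hb (erefl o) hd.
set Q1 := foldl _ _ _ in B1 O1 F1.
have hj1 : favoured Q1 j = o by rewrite /favoured !O1.
have [s2 [B2 O2 F2]] := strict ha hij B1 hj1 F1.
exists (s1 ++ s2); rewrite map_cat foldl_cat -/Q1; split=> //.
by move=> k b hk; rewrite O2 // O1.
Qed.


Lemma cross_edge (N : nat) (e : rel 'I_N) (e_sym : symmetric e)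
  (e_conn : forall i j : 'I_N, connect e i j) (S : {set 'I_N}) r i :
  r \in S -> i \notin S -> exists u v, [/\ u \notin S, v \in S & e u v].
Proof.
move=> hr hi.
case: (boolP [exists u, exists v, [&& u \notin S, v \in S & e u v]]).
  by move=> /existsP[u /existsP[v /and3P[h1 h2 h3]]]; exists u, v.
move=> /negP hn; exfalso.
have hc : closed e (mem S).
  move=> x y hxy; change ((x \in S) = (y \in S)).
  case hx: (x \in S); case hy: (y \in S) => //; exfalso; apply: hn.
    by apply/existsP; exists y; apply/existsP; exists x; rewrite hx hy e_sym hxy.
  by apply/existsP; exists x; apply/existsP; exists y; rewrite hx hy hxy.
have := closed_connect hc (e_conn r i).
change ((r \in S) = (i \in S) -> False); by rewrite hr (negbTE hi).
Qed.

Lemma cp_ge0 (R : realType) (N : nat) (e : rel 'I_N) (eps : R) (heps : 0 < eps < 1)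
  (c : Defs.choice N) : 0 <= choice_prob e eps c.
Proof.
move/andP: heps => [h1 h2].
case: c => [[i j] x] /=.
apply: mulr_ge0; [apply: mulr_ge0|].
- by rewrite invr_ge0 ler0n.
- by case: ifP => _ //; rewrite invr_ge0 ler0n.
- case: x; lra.
Qed.

Lemma cp_gt0 (R : realType) (N : nat) (e : rel 'I_N) (eps : R) (heps : 0 < eps < 1)
  (c : Defs.choice N) : e c.1.1 c.1.2 -> 0 < choice_prob e eps c.
Proof.
move/andP: heps => [h1 h2].
case: c => [[i j] x] /= he.
have hN : (0 < N)%N := leq_ltn_trans (leq0n i) (ltn_ord i).
have hc : (0 < #|[pred k | e i k]|)%N by apply/card_gt0P; exists j.
rewrite he; apply: mulr_gt0; [apply: mulr_gt0|].
- by rewrite invr_gt0 ltr0n.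
- by rewrite invr_gt0 ltr0n.
- case: x; lra.
Qed.

Lemma prob_pos (R : realType) (N : nat) (e : rel 'I_N) (alpha eps : R)
  (heps : 0 < eps < 1) (Q0 : qstate R N) (s : seq (Defs.choice N)) :
  all (fun c : Defs.choice N => e c.1.1 c.1.2) s ->
  strict_consensus (foldl (step alpha) Q0 s) ->
  0 < prob_consensus_by e alpha eps Q0 (size s).
Proof.
move=> hg hc.
rewrite /prob_consensus_by (bigD1 (in_tuple s)) //=.
have h2 : 0 <= \sum_(t : (size s).-tuple (Defs.choice N) | t != in_tuple s)
     (\prod_(c <- t) choice_prob e eps c) *
     (if [exists t1 : 'I_(size s).+1, strict_consensus (state_at alpha Q0 t t1)] then 1 else 0).
  apply: sumr_ge0 => t _; apply: mulr_ge0.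
    by apply: prodr_ge0 => c _; apply: cp_ge0.
  by case: ifP.
have h1 : 0 < \prod_(c <- s) choice_prob e eps c.
  elim: s hg {hc h2} => [|c s IH] /=; first by rewrite big_nil ltr01.
  by move=> /andP[hc hs]; rewrite big_cons mulr_gt0 // ?IH // cp_gt0.
have h3 : [exists t1 : 'I_(size s).+1, strict_consensus (state_at alpha Q0 s t1)].
  by apply/existsP; exists ord_max; rewrite /state_at /= take_size.
rewrite h3 mulr1; lra.
Qed.


Lemma good_map (N : nat) (e : rel 'I_N) (i j : 'I_N) (he : e i j) (s : seq bool) :
  all (fun c : Defs.choice N => e c.1.1 c.1.2) [seq (i, j, x) | x <- s].
Proof. by elim: s => //= x s ->; rewrite he. Qed.

Lemma grow (R : realType) (N : nat) (e : rel 'I_N) (e_sym : symmetric e)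
  (e_irr : irreflexive e) (e_conn : forall i j : 'I_N, connect e i j)
  (alpha : R) (ha : 0 < alpha < 1) (o : bool) (n : nat) : forall Q : qstate R N,
  bnd Q -> (N - #|[set k | (Q k (~~ o) < Q k o)%R]| <= n)%N ->
  (exists r, Q r (~~ o) < Q r o) ->
  exists s, all (fun c : Defs.choice N => e c.1.1 c.1.2) s /\
            strict_consensus (foldl (step alpha) Q s).
Proof.
elim: n => [|n IH] Q hb hn [r hr].
all: set S := [set k | Q k (~~ o) < Q k o] in hn *.
all: case: (boolP [forall k, k \in S]) => hall.
- exists [::]; split=> //; apply/existsP; exists o; apply/forallP => k.
  by move/forallP: hall => /(_ k); rewrite inE.
- exfalso; move: hall; rewrite negb_forall => /existsP[i hi].
  have : S \proper setT by rewrite properT; apply/eqP => hS; move: hi; rewrite hS inE.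
  move/proper_card; rewrite cardsT card_ord => hlt.
  by move: hn; rewrite leqn0 subn_eq0 leqNgt hlt.
- exists [::]; split=> //; apply/existsP; exists o; apply/forallP => k.
  by move/forallP: hall => /(_ k); rewrite inE.
move: hall; rewrite negb_forall => /existsP[i0 hi0].
have hrS : r \in S by rewrite inE.
have [i [j [hi hj hij]]] := cross_edge e_sym e_conn hrS hi0.
have hji : j != i by apply/eqP => eji; move: hij; rewrite eji e_irr.
have hfj : favoured Q j = o by apply: fav_true; move: hj; rewrite inE.
have [s1 [B1 O1 F1]] := convert ha hji hb.
set Q1 := foldl _ _ _ in B1 O1 F1.
rewrite hfj in F1.
set S1 := [set k | Q1 k (~~ o) < Q1 k o].
have hsub : S \proper S1.
  apply/properP; split; last by exists i; rewrite // inE.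
  apply/subsetP => k; rewrite !inE => hk.
  case: (eqVneq k i) => [eki|nki]; first by rewrite eki.
  by rewrite !O1.
have hn1 : (N - #|S1| <= n)%N.
  have := proper_card hsub.
  have : (#|S1| <= N)%N by rewrite -[X in (_ <= X)%N]card_ord max_card.
  move: hn; lia.
have [s2 [G2 C2]] := IH Q1 B1 hn1 (ex_intro _ i F1).
exists ([seq (i, j, x) | x <- s1] ++ s2); split.
  by rewrite all_cat good_map.
by rewrite foldl_cat.
Qed.


Unset Implicit Arguments. Set Strict Implicit.

Theorem lemma2 (R : realType) (N : nat) (hN : (2 <= N)%N) (e : rel 'I_N)
  (e_sym : symmetric e) (e_irr : irreflexive e)
  (e_conn : forall i j : 'I_N, connect e i j)
  (alpha eps : R) (halpha : 0 < alpha < 1) (heps : 0 < eps < 1)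
  (Q0 : qstate R N) (hQ0 : forall i b, -1 <= Q0 i b <= 1) :
  exists T : nat, 0 < prob_consensus_by e alpha eps Q0 T.
Proof.
have h0 : (0 < N)%N by lia.
have h1 : (1 < N)%N by lia.
pose r : 'I_N := Ordinal h0.
pose r2 : 'I_N := Ordinal h1.
have hr : r \in [set r] by rewrite inE.
have hr2 : r2 \notin [set r] by rewrite inE.
have [u [v [hu hv huv]]] := cross_edge e_sym e_conn hr hr2.
move: hv; rewrite inE => /eqP ev; subst v.
have hur : u != r by move: hu; rewrite inE.
have hb : bnd Q0 by [].
have [s1 [B1 O1 F1]] := convert halpha hur hb.
set Q1 := foldl _ _ _ in B1 O1 F1.
have [s2 [G2 C2]] := grow e_sym e_irr e_conn halpha B1 (leq_subr _ N) (ex_intro _ r F1).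
exists (size ([seq (r, u, x) | x <- s1] ++ s2)).
apply: prob_pos => //.
  by rewrite all_cat good_map // e_sym.
by rewrite foldl_cat.
Qed.
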